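(* Let $F_0$ be a QF-NIA formula, and let $F$ be a linearization of $F_0$ with artificial bounds $B$. Let $\mathrm{vars}(B)$ be the set of variables $V$ for which an artificial domain $[l_V,u_V]$ is imposed by $B$ (each bound of $B$ being of the form $l_V\le V$ or $V\le u_V$ for some $V\in\mathrm{vars}(B)$). For a model $M$ of $F$ define $$\mathrm{cost}(M)=\sum_{V\in\mathrm{vars}(B)}\delta(M(V),[l_V,u_V]),$$ where $\delta(z,[l,u])=l-z$ if $z<l$, $\delta(z,[l,u])=0$ if $l\le z\le u$, and $\delta(z,[l,u])=z-u$ if $z>u$. Then $\mathrm{cost}$ is admissible: $\mathrm{cost}(M)\ge 0$ for every model $M$ of $F$, and if $\mathrm{cost}(M)=0$ then $M$ (restricted to the variables of $F_0$) is a model of $F_0$.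
   Context: A QF-NIA formula is a quantifier-free CNF formula whose atoms are polynomial inequalities with integer coefficients over integer-valued variables. Artificial bounds are a finite set $B$ of constraints $V\ge L$ or $V\le U$ ($L,U\in\mathbb{Z}$) on variables of $F_0$. A linearization $F$ of $F_0$ with artificial bounds $B$ is a QF-LIA formula obtained as follows. While some non-linear monomial $Q$ occurs, pick a variable $V$ of $Q$ that has both a lower bound $l$ and an upper bound $u$ in $F_0\cup B$. Introduce a fresh integer variable $v_Q$ and replace every occurrence of $Q$ by $v_Q$. Add, for each integer $K$ with $l\le K\le u$, the clause $V=K\rightarrow v_Q=Q[V:=K]$, where $Q[V:=K]$ is $Q$ with $V$ evaluated at $K$. New non-linear monomials appearing in these clauses are processed in the same way. $F$ does not contain the bounds of $B$. A model of $F$ is an integer assignment to all variables of $F$ (original and fresh) satisfying $F$. *)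

(* Defs.v *)
From mathcomp Require Import all_boot all_order all_algebra.
From Stdlib Require Lists.List.
Set Implicit Arguments. Unset Strict Implicit. Unset Printing Implicit Defensive.
Import Order.TTheory GRing.Theory Num.Theory.
Local Open Scope ring_scope.

Definition var := nat.
(* A monomial is a multiset of variables (the product of its elements);
   two monomials are the same monomial iff they are permutations of each other. *)
Definition monomial := seq var.
Definition term := (int * monomial)%type.
Definition poly := seq term.
(* An atom is  p REL 0. *)
Inductive rel := Le | Lt | Ge | Gt | Eq | Ne.
Definition atom := (poly * rel)%type.
Definition clause := seq atom.
Definition formula := seq clause.
Definition assignment := var -> int.

Definition eval_mono (s : assignment) (m : monomial) : int := \prod_(x <- m) s x.
Definition eval_poly (s : assignment) (p : poly) : int :=
  \sum_(t <- p) t.1 * eval_mono s t.2.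
Definition eval_rel (r : rel) (z : int) : bool :=
  match r with
  | Le => z <= 0 | Lt => z < 0 | Ge => 0 <= z | Gt => 0 < z
  | Eq => z == 0 | Ne => z != 0
  end.
Definition eval_atom (s : assignment) (a : atom) : bool := eval_rel a.2 (eval_poly s a.1).
Definition eval_clause (s : assignment) (c : clause) : bool := has (eval_atom s) c.
Definition models (s : assignment) (F : formula) : bool := all (eval_clause s) F.

Definition atom_vars (a : atom) : seq var := flatten (map snd a.1).
Definition clause_vars (c : clause) : seq var := flatten (map atom_vars c).
Definition fvars (F : formula) : seq var := flatten (map clause_vars F).

Definition nonlinear (m : monomial) : bool := (1 < size m)%N.
Definition lin_atom (a : atom) : bool := all (fun t => ~~ nonlinear t.2) a.1.
Definition is_linear (F : formula) : bool := all (all lin_atom) F.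

Definition occurs (Q : monomial) (F : formula) : bool :=
  has (has (fun a => has (fun t => perm_eq t.2 Q) a.1)) F.

Definition repl_term (Q : monomial) (v : var) (t : term) : term :=
  if perm_eq t.2 Q then (t.1, [:: v]) else t.
Definition repl_formula (Q : monomial) (v : var) (F : formula) : formula :=
  map (map (fun a => (map (repl_term Q v) a.1, a.2))) F.

(* Q[V:=K] as a term: K^(multiplicity of V in Q) * (Q with V removed) *)
Definition subst_mono (Q : monomial) (V : var) (K : int) : term :=
  (K ^+ count_mem V Q, filter (predC1 V) Q).

(* the clause  V = K -> v = Q[V:=K], i.e.  (V - K != 0) \/ (v - Q[V:=K] = 0) *)
Definition case_clause (Q : monomial) (V v : var) (K : int) : clause :=
  [:: ([:: (1, [:: V]); (- K, [::])], Ne);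
      ([:: (1, [:: v]); (- (subst_mono Q V K).1, (subst_mono Q V K).2)], Eq)].

Definition case_clauses (Q : monomial) (V v : var) (l u : int) : formula :=
  if l <= u then [seq case_clause Q V v (l + i%:Z) | i <- iota 0 (absz (u - l)).+1]
  else [::].

(* Artificial bounds: each entry (V, lo, hi) imposes V >= l if lo = Some l and
   V <= u if hi = Some u; the artificial domain of V is [lo, hi]. *)
Definition abounds := seq (var * option int * option int).
Definition bvars (B : abounds) : seq var := map (fun b => b.1.1) B.

Definition has_lb (F0 : formula) (B : abounds) (V : var) (L : int) : Prop :=
  (exists a : atom, Stdlib.Lists.List.In [:: a] F0 /\ lin_atom a /\
      forall s : assignment, eval_atom s a -> L <= s V)
  \/ (exists ou, Stdlib.Lists.List.In (V, Some L, ou) B).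
Definition has_ub (F0 : formula) (B : abounds) (V : var) (U : int) : Prop :=
  (exists a : atom, Stdlib.Lists.List.In [:: a] F0 /\ lin_atom a /\
      forall s : assignment, eval_atom s a -> s V <= U)
  \/ (exists ol, Stdlib.Lists.List.In (V, ol, Some U) B).

Inductive lin_step (F0 : formula) (B : abounds) : formula -> formula -> Prop :=
| LinStep (F : formula) (Q : monomial) (V : var) (l u : int) (v : var) :
    nonlinear Q -> occurs Q F -> V \in Q ->
    has_lb F0 B V l -> has_ub F0 B V u ->
    v \notin fvars F0 -> v \notin fvars F ->
    lin_step F0 B F (repl_formula Q v F ++ case_clauses Q V v l u).

Inductive lin_steps (F0 : formula) (B : abounds) : formula -> formula -> Prop :=
| LinRefl F : lin_steps F0 B F F
| LinTrans F1 F2 F3 : lin_step F0 B F1 F2 -> lin_steps F0 B F2 F3 -> lin_steps F0 B F1 F3.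

Definition linearization (F0 : formula) (B : abounds) (F : formula) : Prop :=
  lin_steps F0 B F0 F /\ is_linear F.

Definition delta (z : int) (lo hi : option int) : int :=
  match lo with
  | Some l => if z < l then l - z else
              match hi with Some u => if u < z then z - u else 0 | None => 0 end
  | None => match hi with Some u => if u < z then z - u else 0 | None => 0 end
  end.

Definition cost (B : abounds) (M : assignment) : int :=
  \sum_(b <- B) delta (M b.1.1) b.1.2 b.2.

(* Main.v *)
Require Import Defs.
From mathcomp Require Import all_boot all_order all_algebra.
From Stdlib Require Import List.
Import Order.TTheory GRing.Theory Num.Theory.
Local Open Scope ring_scope.
Set Implicit Arguments.

Lemma mono_split (M : assignment) (Q : monomial) (V : var) :
  eval_mono M Q = M V ^+ count_mem V Q * \prod_(x <- filter (predC1 V) Q) M x.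
Proof.
rewrite /eval_mono; elim: Q => [|x Q IH]; first by rewrite !big_nil mulr1.
rewrite /= big_cons IH; case: (eqVneq x V) => [->|ne] /=.
  by rewrite add1n exprS mulrA.
by rewrite big_cons add0n mulrCA.
Qed.

Lemma repl_models (M : assignment) Q v F :
  M v = eval_mono M Q -> models M (repl_formula Q v F) = models M F.
Proof.
move=> Hv; rewrite /models /repl_formula all_map; apply: eq_all => c /=.
rewrite /eval_clause has_map; apply: eq_has => a /=.
rewrite /eval_atom /=; congr (eval_rel _ _).
rewrite /eval_poly big_map; apply: eq_bigr => t _.
rewrite /repl_term; case: ifP => // Hp /=.
rewrite /eval_mono big_cons big_nil mulr1 Hv; congr (_ * _).
by apply: perm_big; rewrite perm_sym.
Qed.

Lemma repl_lin Q v (a : atom) : nonlinear Q -> lin_atom a ->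
  map (repl_term Q v) a.1 = a.1.
Proof.
move=> HQ Ha; rewrite -[RHS]map_id; apply/eq_in_map => t Ht.
rewrite /repl_term; case: ifP => // Hp.
have := allP Ha t Ht; rewrite /nonlinear (perm_size Hp).
by rewrite /nonlinear in HQ; rewrite HQ.
Qed.

Lemma steps_keep F0 B F1 F3 (a : atom) : lin_steps F0 B F1 F3 ->
  In [:: a] F1 -> lin_atom a -> In [:: a] F3.
Proof.
elim=> // G1 G2 G3 st _ IH Hin Ha; apply: IH => //.
case: st Hin => F Q V l u v HQ _ _ _ _ _ _ Hin.
apply: in_or_app; left.
have -> : [:: a] = (fun c : clause => map (fun a => (map (repl_term Q v) a.1, a.2)) c) [:: a].
  by rewrite /= repl_lin //; case: (a) {Ha Hin}.
exact: in_map.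
Qed.

Lemma in_models M (F : formula) c : models M F -> In c F -> eval_clause M c.
Proof.
elim: F => //= c' F IH /andP[H1 H2] [<-|Hi] //.
exact: IH.
Qed.

Lemma all_In T (p : pred T) s x : all p s -> In x s -> p x.
Proof. elim: s => //= y s IH /andP[H1 H2] [<-|Hi] //; exact: IH. Qed.

Lemma mem_In (x : nat) s : x \in s -> In x s.
Proof. elim: s => //= y s IH; rewrite inE => /orP[/eqP ->|H]; [left|right; exact: IH]; done. Qed.

Lemma delta_lo z l oh : delta z (Some l) oh = 0 -> l <= z.
Proof.
rewrite /delta; case: ltP => [lt|//].
by move/eqP; rewrite subr_eq0 => /eqP E; move: lt; rewrite E ltxx.
Qed.

Lemma delta_hi z ol u : delta z ol (Some u) = 0 -> z <= u.
Proof.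
rewrite /delta; case: ol => [l|]; first case: ltP => [lt|_].
- move/eqP; rewrite subr_eq0 => /eqP E; move: lt; rewrite E ltxx //.
- case: ltP => // lt /eqP; rewrite subr_eq0 => /eqP E; move: lt; rewrite E ltxx //.
- case: ltP => // lt /eqP; rewrite subr_eq0 => /eqP E; move: lt; rewrite E ltxx //.
Qed.

Lemma delta_ge0 z ol oh : 0 <= delta z ol oh.
Proof.
rewrite /delta; case: ol => [l|]; first case: ltP => [lt|_].
- by rewrite subr_ge0 ltW.
- case: oh => [u|] //; case: ltP => // lt; by rewrite subr_ge0 ltW.
- case: oh => [u|] //; case: ltP => // lt; by rewrite subr_ge0 ltW.
Qed.

Lemma cost0 B M b : cost B M = 0 -> In b B -> delta (M b.1.1) b.1.2 b.2 = 0.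
Proof.
rewrite /cost; elim: B => //= b' B IH; rewrite big_cons => H.
have H1 := delta_ge0 (M b'.1.1) b'.1.2 b'.2.
have H2 : 0 <= \sum_(b <- B) delta (M b.1.1) b.1.2 b.2.
  by apply: sumr_ge0 => i _; apply: delta_ge0.
have [E1 E2] : delta (M b'.1.1) b'.1.2 b'.2 = 0 /\
      \sum_(b <- B) delta (M b.1.1) b.1.2 b.2 = 0.
  move/eqP: H; rewrite paddr_eq0 // => /andP[/eqP -> /eqP ->]; by [].
by case=> [<-|Hi] //; apply: IH.
Qed.

Lemma steps_back F0 B M F1 F3 :
  (forall a, In [:: a] F0 -> lin_atom a -> eval_atom M a) ->
  cost B M = 0 ->
  lin_steps F0 B F1 F3 -> models M F3 -> models M F1.
Proof.
move=> HF0 Hc; elim=> // G1 G2 G3 st _ IH H3; have H2 := IH H3; clear IH H3.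
case: st H2 => F Q V l u v HQ _ _ Hlb Hub _ _ H2.
have Hl : l <= M V.
  case: Hlb => [[a [Hin [Ha Hs]]]|[ou Hin]]; first by apply: Hs; apply: HF0.
  by have := cost0 _ Hc Hin; apply: delta_lo.
have Hu : M V <= u.
  case: Hub => [[a [Hin [Ha Hs]]]|[ol Hin]]; first by apply: Hs; apply: HF0.
  by have := cost0 _ Hc Hin; apply: delta_hi.
rewrite /models all_cat in H2; case/andP: H2 => H2a H2b.
have Hv : M v = eval_mono M Q.
  have Hcl : eval_clause M (case_clause Q V v (M V)).
    apply: (@all_In _ (eval_clause M) _ _ H2b); rewrite /case_clauses (le_trans Hl Hu).
    have -> : M V = l + (`|M V - l|%N)%:Z by rewrite gez0_abs ?subr_ge0 // subrKC.
    have Hi : In `|M V - l|%N (iota 0 `|u - l|.+1).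
      apply: mem_In; rewrite mem_iota add0n ltnS leq0n /=.
      rewrite -lez_nat !gez0_abs ?subr_ge0 ?(le_trans Hl Hu) //.
      by rewrite lerD2r.
    exact: (List.in_map (fun i : nat => case_clause Q V v (l + i%:Z)) _ _ Hi).
  move: Hcl; rewrite /eval_clause /= /eval_atom /eval_poly /= !big_cons !big_nil.
  rewrite /eval_mono /= !big_cons !big_nil !mulr1 !mul1r !addr0 subrr eqxx /= orbF.
  rewrite mulNr subr_eq0 => /eqP ->.
  by rewrite -(mono_split M Q V).
by rewrite -(@repl_models M Q v F Hv).
Qed.

Theorem lemma3p4 (F0 : formula) (B : abounds) (F : formula) :
  uniq (bvars B) ->
  {subset bvars B <= fvars F0} ->
  linearization F0 B F ->
  forall M : assignment, models M F ->
    0 <= cost B M /\ (cost B M = 0 -> models M F0).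
Proof.
move=> _ _ [Hst _] M HM; split.
  by rewrite /cost; apply: sumr_ge0 => i _; apply: delta_ge0.
move=> Hc; apply: (steps_back _ Hc Hst HM) => a Hin Ha.
have := @in_models M F _ HM (@steps_keep F0 B F0 F a Hst Hin Ha).
by rewrite /eval_clause /= orbF.
Qed.
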